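(* Let $r$ be an odd prime and $q=2^m$ with $m\ge1$. Then $\Gamma L_1(1,q^r)=\Gamma L(1,q^r)\cap SL(r,q)$ acts transitively on $\mathbb{F}_{q^r}\setminus\{0\}$ if and only if $q=2$.
   Context: Regard $\mathbb{F}_{q^r}$ as an $r$-dimensional $\mathbb{F}_q$-vector space, so $GL(r,q)=GL_{\mathbb{F}_q}(\mathbb{F}_{q^r})$. Let $\alpha$ generate $\mathbb{F}_{q^r}^*$, let $\tau(z)=\alpha z$ and $\sigma(z)=z^q$. $\Gamma L(1,q^r)$ is the subgroup of $GL(r,q)$ generated by $\tau$ and $\sigma$, and $\Gamma L_1(1,q^r)$ is its intersection with $SL(r,q)$. *)

(* Defs.v *)
From HB Require Import structures.
From mathcomp Require Import all_boot all_order all_algebra all_fingroup all_field.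
Set Implicit Arguments. Unset Strict Implicit. Unset Printing Implicit Defensive.
Import GRing.Theory.
Local Open Scope ring_scope.

(* L is a finite field extension of the finite field F = F_q, viewed as an
   F-vector space of dimension \dim {:L}.  [finvect_type L] is the carrier of L
   equipped with its canonical finType (and field) structure, so that
   permutations of L form a finite group. *)
Section GammaL.
Variables (F : finFieldType) (L : fieldExtType F).
Local Notation T := (finvect_type L).

Definition Flinear_perm (p : {perm T}) : bool :=
  [forall a : F, forall x : T, forall y : T, p (a *: x + y) == a *: p x + p y].

Definition det_perm (p : {perm T}) : F :=
  \det (passmx.mxof (vbasis {:L}) (vbasis {:L}) (linfun (fun x : L => (p x : L)))).

Definition GLF : {set {perm T}} := [set p | Flinear_perm p].

Definition SLF : {set {perm T}} := [set p in GLF | det_perm p == 1].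

Definition tau_set (alpha : T) : {set {perm T}} :=
  [set p : {perm T} | [forall z : T, p z == alpha * z]].
Definition sigma_set : {set {perm T}} :=
  [set p : {perm T} | [forall z : T, p z == z ^+ #|F|]].

Definition GammaL (alpha : T) : {set {perm T}} :=
  <<tau_set alpha :|: sigma_set>>%g.

Definition GammaL1 (alpha : T) : {set {perm T}} :=
  GammaL alpha :&: SLF.

End GammaL.

(* Main.v *)
Require Import Defs.
From HB Require Import structures.
From mathcomp Require Import all_boot all_order all_algebra all_fingroup all_field.
From mathcomp Require Import all_solvable zify.
Set Implicit Arguments. Unset Strict Implicit. Unset Printing Implicit Defensive.
Import GRing.Theory.
Local Open Scope ring_scope.

Lemma char_poly_hornerE (F : fieldType) n (A : 'M[F]_n) a :
  (char_poly A).[a] = \det (a%:M - A).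
Proof.
rewrite horner_sum; apply: eq_bigr => s _.
rewrite hornerM horner_exp !hornerE; congr (_ * _).
rewrite (big_morph _ (fun p q => hornerM p q a) (hornerC 1 a)).
by apply: eq_bigr => i _; rewrite !mxE !(hornerE, hornerMn).
Qed.

Lemma det_cyclic (F : fieldType) n (M : 'M[F]_n) :
  odd n ->
  iter n (fun A => A *m M) 1%:M = 1%:M ->
  (forall c : nat -> F, \sum_(i < n) c i *: iter i (fun A => A *m M) 1%:M = 0 ->
      forall i, (i < n)%N -> c i = 0) ->
  \det M = 1.
Proof.
case: n M => [//|n] M on Hn Hind.
have iterE i : iter i (fun A => A *m M) 1%:M = M ^+ i.
  by elim: i => //= i ->; rewrite exprSr mulmxE.
set P := char_poly M - ('X^(n.+1) - 1).
have cP j : (n.+1 <= j)%N -> P`_j = 0.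
  move=> hj; rewrite /P !coefB coefXn coef1.
  case: (ltngtP j n.+1) hj => // [hj _|-> _].
    rewrite nth_default ?size_char_poly //.
    by case: j hj => // j _; rewrite subrr subr0.
  move: (char_poly_monic M); rewrite monicE lead_coefE size_char_poly => /eqP ->.
  by rewrite subr0 subrr.
have sP : (size P <= n.+1)%N by apply/leq_sizeP.
have PE : P = \sum_(i < n.+1) P`_i *: 'X^i.
  rewrite -poly_def; apply/polyP => j; rewrite coef_poly.
  by case: ifP => // /negbT; rewrite -leqNgt => /cP.
have hP : horner_mx M P = 0.
  rewrite /P rmorphB /= Cayley_Hamilton rmorphB rmorphXn /= horner_mx_X rmorph1.
  by rewrite -iterE Hn subrr subr0.
have P0 : P = 0.
  have := hP; rewrite {1}PE linear_sum /=.
  under eq_bigr do rewrite linearZ /= rmorphXn /= horner_mx_X -iterE.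
  move=> /(Hind (fun i => P`_i)) Hc.
  apply/polyP => j; rewrite coef0; case: (ltnP j n.+1) => hj; first exact: Hc.
  exact: cP.
have cpE : char_poly M = 'X^(n.+1) - 1 by apply/eqP; rewrite -subr_eq0 -/P P0.
have := char_poly_det M; rewrite cpE coefB coefXn coef1 /= sub0r.
rewrite -signr_odd on /= expr1 mulN1r => /oppr_inj.
by [].
Qed.
Import passmx.
Section S.
Variables (F : finFieldType) (L : fieldExtType F).
Local Notation T := (finvect_type L).
Local Notation n := (\dim {:L}).
Local Notation q := #|F|.
Let e := vbasis {:L}.
Let eB : basis_of {:L} e := vbasisP _.
Definition D (f : 'End(L)) : F := \det (passmx.mxof e e f).

Lemma D_comp f g : D (f \o g)%VF = D f * D g.
Proof. by rewrite /D (@passmx.mxof_comp _ _ _ _ e e e eB) det_mulmx mulrC. Qed.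

Lemma D_id : D \1%VF = 1.
Proof. by rewrite /D passmx.mxof1 ?det1 // (basis_free eB). Qed.

Lemma linfun_ext (f g : L -> L) : f =1 g -> linfun f = linfun g.
Proof. by move=> fg; rewrite unlock; congr Hom; apply/matrixP => i j; rewrite !mxE /= fg. Qed.

Lemma cardT : #|T| = (q ^ n)%N.
Proof. by rewrite -(card_vspacef (Vector.class T)) card_vspace. Qed.

Lemma fieldT (z : T) : z ^+ #|T| = z.
Proof. exact: expf_card. Qed.

Definition frob (z : L) := z ^+ q.
Lemma frob_linear : linear frob.
Proof.
move=> a x y; rewrite /frob.
have [p _ pcharFp] := finPcharP F.
have pL : p \in [pchar L] by rewrite (pchar_lalg L).
have -> : (a *: x + y) ^+ q = (a *: x) ^+ q + y ^+ q.
  rewrite (card_pprimeChar pcharFp).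
  elim: (logn _ _) => // k IHk; rewrite expnSr !exprM {}IHk.
  by rewrite -!(pFrobenius_autE pL) rmorphD.
rewrite -[in LHS]mulr_algl exprMn -in_algE -rmorphXn expf_card /=.
by rewrite mulr_algl.
Qed.
HB.instance Definition _ := GRing.isSemilinear.Build F L L _ frob
  (GRing.semilinear_linear frob_linear).
Definition sig : 'End(L) := linfun frob.
Lemma sigE z : sig z = z ^+ q.
Proof. by rewrite /sig lfunE. Qed.

Definition sigp (i : nat) : 'End(L) := iter i (fun f => (sig \o f)%VF) \1%VF.
Lemma sigpE i z : sigp i z = z ^+ (q ^ i).
Proof.
elim: i => [|i IH] /=; first by rewrite lfunE /= expn0 expr1.
by rewrite comp_lfunE IH sigE expnSr exprM.
Qed.

Lemma q_gt1 : (1 < q)%N.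
Proof. exact: finRing_gt1. Qed.

Lemma sigp_n : sigp n = \1%VF.
Proof. by apply/lfunP => z; rewrite sigpE lfunE /= -cardT (fieldT (z : T)). Qed.

Lemma mxof_sigp i : passmx.mxof e e (sigp i) = iter i (fun A => A *m passmx.mxof e e sig) 1%:M.
Proof.
elim: i => [|i IH] /=; first by rewrite passmx.mxof1 // (basis_free eB).
by rewrite (@passmx.mxof_comp _ _ _ _ e e e eB) IH.
Qed.

Lemma indep_frob (c : nat -> F) : (forall z : L, \sum_(i < n) c i *: z ^+ (q ^ i) = 0) ->
  forall i, (i < n)%N -> c i = 0.
Proof.
move=> Hz.
pose Q : {poly L} := \sum_(i < n) (c i)%:A *: 'X^(q ^ i).
have n0 : (0 < n)%N by exact: (adim_gt0 {:L}%AS).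
have Q0 : Q = 0.
  apply/eqP; apply: contraT => nQ.
  have := max_poly_roots nQ (rs := enum T).
  have -> : all (root Q) (enum T).
    apply/allP => z _; rewrite /root /Q horner_sum.
    under eq_bigr do rewrite hornerZ hornerXn mulr_algl.
    by rewrite Hz.
  rewrite enum_uniq /= -cardE cardT => /(_ isT isT).
  have sQ : (size Q <= (q ^ n.-1).+1)%N.
    apply/leq_sizeP => j hj; rewrite /Q coef_sum big1 // => i _.
    rewrite coefZ coefXn; case: eqP => [ji|]; last by rewrite mulr0.
    move: hj; rewrite ji ltn_exp2l ?q_gt1 // => hi.
    by move: (ltn_ord i); rewrite -[X in (_ < X)%N](prednK n0) ltnS leqNgt hi.
  move=> /leq_trans /(_ sQ); rewrite ltnS.
  rewrite -[n in (q ^ n)%N](prednK n0) expnS.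
  have := q_gt1; move: (q ^ n.-1)%N (expn_gt0 q n.-1) => k.
  rewrite (ltn_trans _ q_gt1) //= => k0 q1.
  by rewrite leqNgt -[X in (X < _)%N]mul1n ltn_mul2r k0 q1.
move=> i lin; have := congr1 (fun P : {poly L} => P`_(q ^ i)) Q0.
rewrite /Q coef0 coef_sum (bigD1 (Ordinal lin)) //= big1 ?addr0.
  by rewrite coefZ coefXn eqxx mulr1 => /eqP; rewrite scaler_eq0 oner_eq0 orbF => /eqP.
move=> j /= nji; rewrite coefZ coefXn eqn_exp2l ?q_gt1 //.
have -> : (i == j) = false by apply/negbTE; apply: contra nji => /eqP ij; apply/eqP/val_inj. 
by rewrite mulr0.
Qed.

Lemma D_sig : odd n -> D sig = 1.
Proof.
move=> on; apply: det_cyclic => //.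
  by rewrite -mxof_sigp sigp_n passmx.mxof1 // (basis_free eB).
move=> c Hc; apply: indep_frob => z.
have : passmx.mxof e e (\sum_(i < n) c i *: sigp i) = 0.
  rewrite linear_sum /=; rewrite -[RHS]Hc; apply: eq_bigr => i _.
  by rewrite linearZ /= mxof_sigp.
move/eqP; rewrite (passmx.mxof_eq0 eB eB) => /eqP H0.
have := congr1 (fun f : 'End(L) => f z) H0; rewrite sum_lfunE zero_lfunE /= => E; rewrite -[RHS]E.
by apply: eq_bigr => i _; rewrite scale_lfunE sigpE.
Qed.

Lemma D_sigp i : odd n -> D (sigp i) = 1.
Proof.
move=> on; elim: i => [|i IH] /=; first exact: D_id.
by rewrite D_comp D_sig // IH mulr1.
Qed.

Definition chi (a : L) : F := D (@amulr F L a).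

Lemma amulrM' (a b : L) : amulr (a * b) = (amulr b \o amulr a)%VF.
Proof. by apply/lfunP => x; rewrite comp_lfunE !lfunE /= mulrA. Qed.

Lemma chiM a b : chi (a * b) = chi a * chi b.
Proof. by rewrite /chi amulrM' D_comp mulrC. Qed.

Lemma amulr1' : amulr (1 : L) = \1%VF.
Proof. by apply/lfunP => x; rewrite !lfunE /= mulr1. Qed.

Lemma chi1 : chi 1 = 1.
Proof. by rewrite /chi amulr1' D_id. Qed.

Lemma chiX a k : chi (a ^+ k) = chi a ^+ k.
Proof. by elim: k => [|k IH]; rewrite ?chi1 // !exprS chiM IH. Qed.

Lemma chi_scal c : chi (c%:A) = c ^+ n.
Proof.
rewrite /chi.
have -> : amulr (c%:A : L) = c *: \1%VF.
  by apply/lfunP => x; rewrite scale_lfunE !lfunE /= mulr_algr.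
rewrite /D linearZ /= passmx.mxof1 ?(basis_free eB) // scalemx1.
exact: det_scalar.
Qed.

Lemma chi_neq0 a : a != 0 -> chi a != 0.
Proof.
move=> a0; apply/negP => /eqP c0.
have := chiM a a^-1; rewrite mulfV // chi1 c0 mul0r; apply/eqP; exact: oner_neq0.
Qed.

Lemma frob_period (z : T) t : z ^+ (q ^ (t * n)) = z.
Proof.
elim: t => [|t IH]; first by rewrite mul0n expn0 expr1.
by rewrite mulSn expnD mulnC exprM IH -cardT fieldT.
Qed.

Lemma frob_mod (z : T) k : z ^+ (q ^ k) = z ^+ (q ^ (k %% n)).
Proof.
rewrite {1}(divn_eq k n) expnD mulnC exprM.
by rewrite frob_period.
Qed.

Lemma frobF (c : F) k : c ^+ (q ^ k) = c.
Proof. by elim: k => [|k IH]; rewrite ?expr1 // expnSr exprM IH expf_card. Qed.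

Definition Sform : {set {perm T}} :=
  [set p : {perm T} | [exists b : T, [exists i : 'I_n, [forall z : T, p z == b * z ^+ (q ^ i)]]]].

Lemma n_gt0 : (0 < n)%N.
Proof. exact: (adim_gt0 {:L}%AS). Qed.

Lemma Sform_group : group_set Sform.
Proof.
apply/group_setP; split.
  rewrite inE; apply/existsP; exists 1; apply/existsP; exists (Ordinal n_gt0).
  by apply/forallP => z; rewrite perm1 mul1r expn0 expr1.
move=> p1 p2; rewrite !inE => /existsP[b1 /existsP[i /forallP H1]].
move=> /existsP[b2 /existsP[j /forallP H2]].
apply/existsP; exists (b2 * b1 ^+ (q ^ j)); apply/existsP.
exists (Ordinal (ltn_pmod (i + j) n_gt0)); apply/forallP => z.
rewrite permM (eqP (H1 z)) (eqP (H2 _)) /= exprMn -exprM -expnD mulrA.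
by rewrite -frob_mod.
Qed.

Canonical Sform_grp := Group Sform_group.

Lemma GammaL_sub (alpha : T) : (1 < n)%N -> GammaL alpha \subset Sform.
Proof.
move=> n1; rewrite /GammaL gen_subG; apply/subsetP => p; rewrite !inE.
case/orP => /forallP H; apply/existsP.
  exists alpha; apply/existsP; exists (Ordinal n_gt0); apply/forallP => z.
  by rewrite expn0 expr1 H.
by exists 1; apply/existsP; exists (Ordinal n1); apply/forallP => z; rewrite expn1 mul1r H.
Qed.

Lemma det_perm_form (p : {perm T}) (b : T) i :
  (forall z, p z = b * z ^+ (q ^ i)) -> Defs.det_perm p = chi b * D (sigp i).
Proof.
move=> Hp; rewrite /Defs.det_perm.
have -> : linfun (fun x : L => (p x : L)) = (amulr b \o sigp i)%VF.
  rewrite -[RHS]fun_of_lfunK; apply: linfun_ext => x.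
  by rewrite comp_lfunE !lfunE /= sigpE Hp mulrC.
by rewrite -/(D _) D_comp.
Qed.

Lemma chi_inv (alpha : T) (g : {perm T}) x : (1 < n)%N -> odd n ->
  g \in GammaL1 alpha -> chi (g x) = chi x.
Proof.
move=> n1 on; rewrite inE => /andP[/(subsetP (GammaL_sub alpha n1))].
rewrite inE => /existsP[b /existsP[i /forallP Hg]].
have Hg' z : g z = b * z ^+ (q ^ i) by apply/eqP.
rewrite inE => /andP[_ /eqP]; rewrite (det_perm_form Hg') D_sigp // mulr1 => cb.
by rewrite Hg' chiM cb mul1r chiX frobF.
Qed.

Lemma amulr_scal (c : F) : amulr (c%:A : L) = c *: \1%VF.
Proof. by apply/lfunP => x; rewrite scale_lfunE !lfunE /= mulr_algr. Qed.

Lemma unit_order (K : finFieldType) (c : K) : c != 0 -> c ^+ #|K|.-1 = 1.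
Proof.
move=> c0; apply: (mulIf c0); rewrite mul1r -exprSr prednK ?expf_card //.
exact: ltnW (finRing_gt1 K).
Qed.

Lemma chi_nontriv : prime n -> (2 < q)%N -> exists2 a : L, a != 0 & chi a != 1.
Proof.
move=> pn q2.
case: (boolP [exists a : T, (a != 0) && (chi a != 1)]).
  by case/existsP => a /andP[a0 ca]; exists a.
rewrite negb_exists => /forallP H.
have H1 (a : T) : a != 0 -> chi a = 1.
  by move=> a0; move: (H a); rewrite a0 /= negbK => /eqP.
exfalso.
have Hc (c : F) : c != 0 -> c ^+ n = 1.
  by move=> c0; rewrite -chi_scal H1 // scaler_eq0 oner_eq0 orbF.
have n1 := prime_gt1 pn.
have qn : (q <= n)%N.
  have [a Ha] : exists a : T, a \notin [set (c%:A : T) | c : F].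
    apply/existsP; apply: contraT; rewrite negb_exists => /forallP H'.
    have : (#|T| <= #|F|)%N.
      apply: (@leq_trans #|[set (c%:A : T) | c : F]|); last exact: leq_imset_card.
      apply: subset_leq_card.
      by apply/subsetP => z _; move: (H' z); rewrite negbK.
    by rewrite cardT leqNgt -{1}(expn1 q) ltn_exp2l ?q_gt1 // n1.
  set Ma := mxof e e (amulr a).
  have Hev (c : F) : (char_poly Ma).[c] = 1.
    rewrite char_poly_hornerE.
    have -> : c%:M - Ma = mxof e e (amulr (c%:A - a)).
      by rewrite raddfB /= amulr_scal linearB linearZ /= mxof1 ?(basis_free eB) // scalemx1.
    rewrite -/(D _) -/(chi _) H1 // subr_eq0; apply/negP => /eqP E.
    by move: Ha; rewrite -E; apply/negP; rewrite negbK; apply/imsetP; exists c.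
  set R := char_poly Ma - 1.
  have R0 : R != 0.
    apply/eqP => /subr0_eq E; have := size_char_poly Ma; rewrite E size_poly1.
    by case: (\dim _) n1.
  have := max_poly_roots R0 (rs := enum F).
  have -> : all (root R) (enum F).
    by apply/allP => c _; rewrite /root /R !hornerE Hev subrr.
  rewrite enum_uniq -cardE => /(_ isT isT) qR.
  have sR : (size R <= n.+1)%N.
    apply/leq_sizeP => j hj; rewrite /R coefB coef1 nth_default ?size_char_poly //.
    by case: j hj => // j _; rewrite subrr.
  by move: (leq_trans qR sR); rewrite ltnS.
have : has (q.-1).-primitive_root (enum (predC1 (0 : F))).
  apply: has_prim_root.
  - lia.
  - apply/allP => c; rewrite mem_enum /= => c0.
    by rewrite unity_rootE unit_order.
  - exact: enum_uniq.
  - by rewrite -cardE cardC1.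
case/hasP => g; rewrite mem_enum /= => g0 gprim.
have := prim_order_dvd gprim n; rewrite Hc // eqxx => dv.
case/primeP: pn => _ /(_ _ dv) /orP[] /eqP => E.
  by move: E q2; case: #|F| => [|[|[|k]]].
by move: qn q2; rewrite -E; case: #|F| => // k; rewrite /= ltnn.
Qed.

Lemma F2_unit (c : F) : q = 2%N -> c != 0 -> c = 1.
Proof.
move=> q2 c0; apply: (mulIf c0); rewrite mul1r -expr2.
by rewrite -[in X in c ^+ X]q2 expf_card.
Qed.

Lemma mul_SLF (p : {perm T}) (b : T) : q = 2%N -> b != 0 ->
  (forall z, p z = b * z) -> p \in SLF L.
Proof.
move=> q2 b0 Hp; rewrite !inE; apply/andP; split.
  apply/forallP => a; apply/forallP => x; apply/forallP => y.
  by rewrite !Hp mulrDr -scalerAr.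
have Hp' z : p z = b * z ^+ (q ^ 0) by rewrite expn0 expr1 Hp.
rewrite (det_perm_form Hp') /= D_id mulr1.
by rewrite (F2_unit q2 (chi_neq0 b0)).
Qed.
End S.

Unset Implicit Arguments.

Theorem lemma3p3 (m r : nat) (F : finFieldType) (L : fieldExtType F)
    (alpha : finvect_type L) :
  prime r -> odd r -> (0 < m)%N -> #|F| = (2 ^ m)%N -> \dim {:L} = r ->
  (#|finvect_type L|.-1).-primitive_root alpha ->
  [transitive GammaL1 alpha, on [set~ (0 : finvect_type L)] | 'P] <->
  #|F| = 2%N.
Proof.
move=> pr od m0 qF dimL prim.
have n1 : (1 < \dim {:L})%N by rewrite dimL prime_gt1.
have on : odd (\dim {:L}) by rewrite dimL.
have pn : prime (\dim {:L}) by rewrite dimL.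
split.
  move=> tr; apply/eqP; apply: contraT => q2.
  have q2' : (2 < #|F|)%N.
    move: q2; rewrite qF; case: m m0 qF => [|[|k]] //= _ _ _.
    by rewrite -{1}(expn1 2) ltn_exp2l.
  have [a a0 ca] := chi_nontriv pn q2'.
  case/imsetP: tr => x0 x0S Sx.
  have orbit_chi y : y \in orbit 'P (GammaL1 alpha) x0 -> chi y = chi x0.
    case/orbitP => g gG <-; exact: (chi_inv _ n1 on gG).
  have c1 : @chi F L 1 = chi x0 by apply: orbit_chi; rewrite -Sx in_setC1 oner_neq0.
  have ca' : @chi F L a = chi x0 by apply: orbit_chi; rewrite -Sx in_setC1.
  by move: ca; rewrite ca' -c1 chi1 eqxx.
move=> q2.
have alpha0 : alpha != 0.
  rewrite (prim_root_eq0 prim) -lt0n -ltnS prednK; first exact: finRing_gt1.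
  exact: ltnW (finRing_gt1 _).
pose t := perm (mulfI alpha0).
have tE z : t z = alpha * z by rewrite permE.
have tG : t \in GammaL alpha.
  rewrite /GammaL; apply: mem_gen; rewrite !inE; apply/orP; left.
  by apply/forallP => z; rewrite tE.
apply/imsetP; exists 1; first by rewrite in_setC1 oner_neq0.
apply/setP => z; rewrite in_setC1; apply/idP/idP.
  move=> z0; have [k ->] := prim_rootP prim (unit_order z0).
  have tkE (w : finvect_type L) : (t ^+ k)%g w = alpha ^+ k * w.
    rewrite permX; elim: (k : nat) => [|j IH] /=; first by rewrite mul1r.
    by rewrite IH tE exprS mulrA.
  apply/orbitP; exists (t ^+ k)%g; last by rewrite [LHS]tkE mulr1.
  rewrite inE; apply/andP; split; first exact: groupX.
  exact: (mul_SLF q2 (expf_neq0 _ alpha0) tkE).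
case/orbitP => g; rewrite inE => /andP[_ gS] <-.
move: gS; rewrite inE => /andP[]; rewrite inE => lin _.
have g0 : g 0 = 0.
  move: lin => /forallP /(_ 1) /forallP /(_ 0) /forallP /(_ 0) /eqP.
  by rewrite !scale1r !addr0 -{1}[g 0]addr0 => /addrI.
apply/negP => /eqP g1; have := perm_inj (etrans g1 (esym g0)).
by move/eqP; rewrite oner_eq0.
Qed.
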